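(* Let $P$ be a finite poset and $\epsilon$ the covering-relation labeling induced by a labeling of $P$. Suppose that $\Omega(P,\epsilon;t)=\Omega(P,-\epsilon;t+s)$ for some $s\in\mathbb{Z}$. Then $-r(-\epsilon)\le s\le r(\epsilon)$. Moreover $s=r(\epsilon)$ holds if and only if $P$ is $\epsilon$-graded, and $s=-r(-\epsilon)$ holds if and only if $P$ is $\epsilon$-graded.
   Context: $P$ has $p$ elements, $\omega:P\to\{1,\dots,p\}$ a bijection; write $x\prec y$ if $y$ covers $x$, $\epsilon(x,y)=1$ if $\omega(x)<\omega(y)$, $-1$ otherwise; $-\epsilon$ is $(-\epsilon)(x,y)=-\epsilon(x,y)$ (induced by $p+1-\omega$). A $(P,\epsilon)$-partition is an order-reversing map $\sigma:P\to\{1,2,\dots\}$ with $\sigma(x)>\sigma(y)$ whenever $x\prec y$ and $\epsilon(x,y)=-1$; $\Omega(P,\epsilon;n)$ is the number of such with largest part at most $n$ (a polynomial in $n$). $r(\epsilon)=\max\sum_{i=1}^\ell\epsilon(x_{i-1},x_i)$ over all maximal chains $x_0\prec\cdots\prec x_\ell$ of $P$, and similarly for $r(-\epsilon)$. $P$ is $\epsilon$-graded if this sum is the same for all maximal chains. *)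

(* Defs.v *)
From mathcomp Require Import all_boot all_order all_algebra.
Set Implicit Arguments. Unset Strict Implicit. Unset Printing Implicit Defensive.
Import Order.TTheory GRing.Theory Num.Theory.

Section PPartitions.
Variables (d : Order.disp_t) (T : finPOrderType d).

Definition covers (x y : T) : bool :=
  (x < y)%O && [forall z : T, ~~ ((x < z)%O && (z < y)%O)].

Definition eps (p : nat) (omega : T -> 'I_p) (x y : T) : int :=
  if (omega x < omega y)%N then 1%R else (-1)%R.

Definition neg_eps (e : T -> T -> int) (x y : T) : int := (- e x y)%R.

(* (P,e)-partition with largest part at most n: sigma x in 'I_n encodes the
   part sigma x + 1 in {1,...,n}. *)
Definition is_partition (e : T -> T -> int) (n : nat) (sigma : {ffun T -> 'I_n}) : bool :=
  [forall x : T, forall y : T, ((x <= y)%O ==> (sigma y <= sigma x)%N) &&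
     ((covers x y && (e x y == (-1)%R)) ==> (sigma y < sigma x)%N)].

Definition Omega (e : T -> T -> int) (n : nat) : nat :=
  #|[set sigma : {ffun T -> 'I_n} | is_partition e sigma]|.

Definition max_chain (x0 : T) (s : seq T) : bool :=
  [&& path covers x0 s,
      [forall z : T, ~~ (z < x0)%O] &
      [forall z : T, ~~ (last x0 s < z)%O]].

Definition chain_sum (e : T -> T -> int) (x0 : T) (s : seq T) : int :=
  (\sum_(xy <- zip (x0 :: s) s) e xy.1 xy.2)%R.

Definition is_r (e : T -> T -> int) (r : int) : Prop :=
  (exists x0 s, max_chain x0 s /\ chain_sum e x0 s = r) /\
  (forall x0 s, max_chain x0 s -> (chain_sum e x0 s <= r)%R).

Definition graded (e : T -> T -> int) : Prop :=
  forall x0 s y0 t, max_chain x0 s -> max_chain y0 t ->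
    chain_sum e x0 s = chain_sum e y0 t.

End PPartitions.

(* Main.v *)
Require Import Defs.
From mathcomp Require Import all_boot all_order all_algebra.
From mathcomp Require Import zify.
From Stdlib Require Import FunctionalExtensionality.
Set Implicit Arguments. Unset Strict Implicit. Unset Printing Implicit Defensive.
Import Order.TTheory GRing.Theory Num.Theory.
Local Open Scope ring_scope.


Section Chains.
Variables (d : Order.disp_t) (T : finPOrderType d).
Local Notation cov := (@covers d T).

Fixpoint csum (w : T -> T -> int) (x : T) (s : seq T) : int :=
  if s is y :: s' then w x y + csum w y s' else 0.

Lemma chain_sumE w x s : chain_sum w x s = csum w x s.
Proof.
elim: s x => [|y s IH] x; first by rewrite /chain_sum big_nil.
by rewrite /chain_sum /= big_cons /= -IH.
Qed.

Lemma csum_cat w x s1 s2 :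
  csum w x (s1 ++ s2) = csum w x s1 + csum w (last x s1) s2.
Proof.
elim: s1 x => [|y s IH] x /=; first by rewrite add0r.
by rewrite IH addrA.
Qed.

Lemma csum_le w w' x s : (forall a b, w a b <= w' a b) -> csum w x s <= csum w' x s.
Proof.
move=> H; elim: s x => [|y s IH] x //=.
by apply: lerD; [apply: H | apply: IH].
Qed.

Lemma covers_lt (x y : T) : covers x y -> (x < y)%O.
Proof. by case/andP. Qed.

Lemma path_lt (x : T) s : path cov x s -> path <%O x s.
Proof. by apply: sub_path => a b; apply: covers_lt. Qed.

Lemma path_lt_last (x y : T) s : path cov x (y :: s) -> (x < last y s)%O.
Proof.
move=> Hp0; have Hp := path_lt Hp0.
have := order_path_min (@lt_trans _ T) Hp.
by move=> /allP /(_ (last y s)); rewrite mem_last => /(_ isT).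
Qed.

Lemma path_le_last (x : T) s : path cov x s -> (x <= last x s)%O.
Proof.
case: s => [|y s] // Hp; exact: ltW (path_lt_last Hp).
Qed.

Lemma path_last_eq (x : T) s : path cov x s -> last x s = x -> s = [::].
Proof.
case: s => [|y s] // /path_lt_last H /= E.
by move: H; rewrite E ltxx.
Qed.

Lemma path_cover_last (x y : T) s :
  covers x y -> path cov x s -> last x s = y -> s = [:: y].
Proof.
move=> cxy; case: s => [|z s] /=.
  by move=> _ E; move: (covers_lt cxy); rewrite E ltxx.
case/andP=> cxz pz E.
have zy : (z <= y)%O by rewrite -E; apply: path_le_last.
case: (eqVneq z y) => [ezy|nzy].
  by subst z; rewrite (path_last_eq pz E).
move: cxy => /andP [_ /forallP /(_ z)].
by rewrite (covers_lt cxz) /= lt_neqAle nzy zy.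
Qed.

Lemma path_size (x : T) s : path cov x s -> (size s < #|T|)%N.
Proof.
move=> /path_lt Hp.
have U : uniq (x :: s) by apply: lt_sorted_uniq.
have := max_card (mem (x :: s)).
by rewrite (card_uniqP U).
Qed.

Lemma sat_chain (x y : T) : (x < y)%O -> exists s, path cov x s /\ last x s = y.
Proof.
move: {2}#|[set z | (x < z)%O && (z < y)%O]| (leqnn #|[set z | (x < z)%O && (z < y)%O]|) => k.
elim: k x y => [|k IH] x y.
  rewrite leqn0 => /eqP /cards0_eq E xy.
  exists [:: y]; split => //=; rewrite andbT /covers xy /=.
  apply/forallP => z; apply/negP => H.
  by have := in_set0 z; rewrite -E inE H.
move=> Hk xy.
case: (boolP [forall z, ~~ ((x < z)%O && (z < y)%O)]) => [H|].
  by exists [:: y]; split => //=; rewrite andbT /covers xy H.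
rewrite negb_forall => /existsP [z]; rewrite negbK => /andP [xz zy].
have [s1 [p1 l1]] : exists s, path cov x s /\ last x s = z.
  apply: (IH x z) => //; rewrite -ltnS; apply: leq_trans Hk.
  apply: proper_card; apply/properP; split.
    apply/subsetP => w; rewrite !inE => /andP [-> wz] /=; exact: lt_trans wz zy.
  by exists z; rewrite !inE ?ltxx ?andbF // xz zy.
have [s2 [p2 l2]] : exists s, path cov z s /\ last z s = y.
  apply: (IH z y) => //; rewrite -ltnS; apply: leq_trans Hk.
  apply: proper_card; apply/properP; split.
    apply/subsetP => w; rewrite !inE => /andP [zw ->]; rewrite andbT; exact: lt_trans xz zw.
  by exists z; rewrite !inE ?ltxx ?andbF // xz zy.
exists (s1 ++ s2); split; first by rewrite cat_path p1 l1 p2.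
by rewrite last_cat l1 l2.
Qed.

Lemma le_chain (x y : T) : (x <= y)%O -> exists s, path cov x s /\ last x s = y.
Proof.
rewrite le_eqVlt => /orP [/eqP ->|]; first by exists [::].
exact: sat_chain.
Qed.

Lemma ex_min_below (x : T) : exists m s,
  [forall z, ~~ (z < m)%O] /\ path cov m s /\ last m s = x.
Proof.
move: {2}#|[set z | (z < x)%O]| (leqnn #|[set z | (z < x)%O]|) => k.
elim: k x => [|k IH] x.
  rewrite leqn0 => /eqP /cards0_eq E.
  exists x, [::]; split => //; apply/forallP => z; apply/negP => H.
  by have := in_set0 z; rewrite -E inE H.
move=> Hk.
case: (boolP [forall z, ~~ (z < x)%O]) => [H|].
  by exists x, [::].
rewrite negb_forall => /existsP [z]; rewrite negbK => zx.
have [m [s [Hm [p l]]]] : exists m s, [forall z, ~~ (z < m)%O] /\ path cov m s /\ last m s = z.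
  apply: IH; rewrite -ltnS; apply: leq_trans Hk.
  apply: proper_card; apply/properP; split.
    apply/subsetP => w; rewrite !inE => wz; exact: lt_trans wz zx.
  by exists z; rewrite !inE ?ltxx // zx.
have [s' [p' l']] := sat_chain zx.
exists m, (s ++ s'); split => //; split; first by rewrite cat_path p l p'.
by rewrite last_cat l l'.
Qed.

Lemma ex_max_above (x : T) : exists s,
  path cov x s /\ [forall z, ~~ (last x s < z)%O].
Proof.
move: {2}#|[set z | (x < z)%O]| (leqnn #|[set z | (x < z)%O]|) => k.
elim: k x => [|k IH] x.
  rewrite leqn0 => /eqP /cards0_eq E.
  exists [::]; split => //; apply/forallP => z; apply/negP => H.
  by have := in_set0 z; rewrite -E inE H.
move=> Hk.
case: (boolP [forall z, ~~ (x < z)%O]) => [H|].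
  by exists [::].
rewrite negb_forall => /existsP [z]; rewrite negbK => xz.
have [s [p l]] : exists s, path cov z s /\ [forall w, ~~ (last z s < w)%O].
  apply: IH; rewrite -ltnS; apply: leq_trans Hk.
  apply: proper_card; apply/properP; split.
    apply/subsetP => w; rewrite !inE => zw; exact: lt_trans xz zw.
  by exists z; rewrite !inE ?ltxx // xz.
have [s' [p' l']] := sat_chain xz.
exists (s' ++ s); split; first by rewrite cat_path p' l' p.
by rewrite last_cat l'.
Qed.

Fixpoint seqs_upto (k : nat) : seq (seq T) :=
  if k is k'.+1 then [::] :: [seq a :: t | a <- enum T, t <- seqs_upto k']
  else [:: [::]].

Lemma mem_seqs_upto k s : (size s <= k)%N -> s \in seqs_upto k.
Proof.
elim: k s => [|k IH] [|a s] //=; try by rewrite inE eqxx.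
rewrite ltnS => Hs; rewrite inE; apply/orP; right.
by apply: (allpairs_f (fun a t => a :: t)); [rewrite mem_enum | apply: IH].
Qed.

Lemma list_argmax (l : seq (seq T)) (F : seq T -> int) :
  l != [::] -> exists2 s, s \in l & forall s', s' \in l -> F s' <= F s.
Proof.
elim: l => [|a l IH] // _.
case: (eqVneq l [::]) => [->|ne].
  by exists a; rewrite ?inE // => s'; rewrite inE => /eqP ->.
have [b bl Hb] := IH ne.
case: (lerP (F a) (F b)) => Hab.
  exists b; first by rewrite inE bl orbT.
  by move=> s'; rewrite inE => /orP [/eqP ->|/Hb].
exists a; first by rewrite inE eqxx.
move=> s'; rewrite inE => /orP [/eqP ->//|/Hb H]; exact: le_trans H (ltW Hab).
Qed.

Lemma ex_max_chain (x : T) (F : seq T -> int) : exists s,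
  path cov x s /\ forall s', path cov x s' -> F s' <= F s.
Proof.
pose l := [seq s <- seqs_upto #|T| | path cov x s].
have ne : l != [::].
  apply/eqP => E; have : [::] \in l by rewrite mem_filter /= mem_seqs_upto.
  by rewrite E.
have [s sl Hs] := list_argmax F ne.
move: sl; rewrite mem_filter => /andP [ps _].
exists s; split => // s' ps'; apply: Hs.
by rewrite mem_filter ps' mem_seqs_upto // ltnW // (path_size ps').
Qed.

Lemma build (w : T -> T -> int) (c : T -> int) : exists tau : T -> int,
  (forall z s, path cov z s -> c (last z s) + csum w z s <= tau z) /\
  (forall z, exists s, path cov z s /\ tau z = c (last z s) + csum w z s).
Proof.
have H : forall z, exists t : int, (forall s, path cov z s -> c (last z s) + csum w z s <= t) /\
   exists s, path cov z s /\ t = c (last z s) + csum w z s.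
  move=> z; have [s [ps Hs]] := ex_max_chain z (fun s => c (last z s) + csum w z s).
  by exists (c (last z s) + csum w z s); split => //; exists s.
have [tau Ht] := fin_all_exists H.
by exists tau; split => z; have [] := Ht z.
Qed.

Lemma build_cover w c tau :
  (forall z, exists s, path cov z s /\ tau z = c (last z s) + csum w z s) ->
  (forall z s, path cov z s -> c (last z s) + csum w z s <= tau z) ->
  forall x y, covers x y -> tau y + w x y <= tau x.
Proof.
move=> Ha Hm x y cxy.
have [s [ps ->]] := Ha y.
have := Hm x (y :: s); rewrite /= cxy ps => /(_ isT).
by rewrite -addrA [csum w y s + _]addrC.
Qed.

End Chains.


Section Labeled.
Variables (d : Order.disp_t) (T : finPOrderType d).
Local Notation cov := (@covers d T).

Definition dsc (e : T -> T -> int) (x y : T) : int := ((e x y == -1 : bool) : nat)%:Z.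

Lemma dsc_ge0 e x y : 0 <= dsc e x y.
Proof. by rewrite /dsc; case: (e x y == -1). Qed.

Lemma dsc_le1 e x y : dsc e x y <= 1.
Proof. by rewrite /dsc; case: (e x y == -1). Qed.

Lemma csum_dsc_ge0 e x s : 0 <= csum (dsc e) x s.
Proof.
elim: s x => [|y s IH] x //=; apply: addr_ge0; [exact: dsc_ge0 | exact: IH].
Qed.

Lemma csum_dsc_size e x s : csum (dsc e) x s <= (size s)%:Z.
Proof.
elim: s x => [|y s IH] x //=.
have := dsc_le1 e x y; have := IH y; lia.
Qed.

Lemma part_cover e n (sg : {ffun T -> 'I_n}) x y :
  is_partition e sg -> cov x y -> (sg y)%:Z + dsc e x y <= (sg x)%:Z.
Proof.
move=> /forallP /(_ x) /forallP /(_ y) /andP [H1 H2] cxy.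
have xy : (x <= y)%O by apply: ltW; apply: covers_lt.
move: H1; rewrite xy /= => H1.
move: H2; rewrite cxy /= /dsc.
case: (e x y == -1) => /= H2.
  lia.
lia.
Qed.

Lemma part_chain e n (sg : {ffun T -> 'I_n}) x s :
  is_partition e sg -> path cov x s ->
  (sg (last x s))%:Z + csum (dsc e) x s <= (sg x)%:Z.
Proof.
move=> Hp; elim: s x => [|y s IH] x /=; first by rewrite addr0.
case/andP=> cxy ps.
have := IH y ps; have := part_cover Hp cxy; lia.
Qed.

Lemma path_mono (v : T -> int) e :
  (forall x y, cov x y -> v y + dsc e x y <= v x) ->
  forall x s, path cov x s -> v (last x s) <= v x.
Proof.
move=> Hv x s; elim: s x => [|y s IH] x //= /andP [cxy ps].
have := IH _ ps; have := Hv _ _ cxy; have := dsc_ge0 e x y; lia.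
Qed.

Lemma mk_part e N (v : T -> int) :
  (forall x, 0 <= v x < N.+1%:Z) ->
  (forall x y, cov x y -> v y + dsc e x y <= v x) ->
  is_partition e [ffun x => (inord (absz (v x)) : 'I_N.+1)].
Proof.
move=> Hb Hc.
have val x : (([ffun x => (inord (absz (v x)) : 'I_N.+1)] x : nat))%:Z = v x.
  rewrite ffunE inordK; have := Hb x; lia.
apply/forallP => x; apply/forallP => y; apply/andP; split; apply/implyP.
  move=> /le_chain [s [ps ls]]; rewrite !ffunE !inordK; try by have := Hb x; have := Hb y; lia.
  have := path_mono Hc ps; rewrite ls.
  have := Hb x; have := Hb y; lia.
case/andP=> cxy exy.
have := Hc _ _ cxy; rewrite /dsc exy /= !ffunE !inordK; try by have := Hb x; have := Hb y; lia.
Qed.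

Lemma mk_part_val N (v : T -> int) x :
  0 <= v x < N.+1%:Z ->
  (([ffun x => (inord (absz (v x)) : 'I_N.+1)] x : nat))%:Z = v x.
Proof. rewrite ffunE => H; rewrite inordK; lia. Qed.

End Labeled.


Section Inj.
Variables (d : Order.disp_t) (T : finPOrderType d).
Local Notation cov := (@covers d T).
Variable e : T -> T -> int.
Hypothesis he : forall x y, e x y = 1 \/ e x y = -1.

Lemma e_split x y : e x y = dsc (neg_eps e) x y - dsc e x y.
Proof.
rewrite /dsc /neg_eps; case: (he x y) => ->; rewrite ?opprK eqxx //=.
Qed.

Lemma csum_e_ge x s : - csum (dsc e) x s <= csum e x s.
Proof.
elim: s x => [|y s IH] x //=.
have := IH y; have := e_split x y; have := dsc_ge0 (neg_eps e) x y; lia.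
Qed.

Lemma max_no_path (M : T) s : [forall z, ~~ (M < z)%O] -> path cov M s -> s = [::].
Proof.
case: s => [|y s] // /forallP /(_ (last y s)) H /path_lt_last H'.
by rewrite H' in H.
Qed.

Lemma h_exists (r : int) :
  (forall x0 s, max_chain x0 s -> chain_sum e x0 s <= r) ->
  exists h : T -> int,
  [/\ (forall x y, cov x y -> h y + e x y <= h x),
     (forall x, exists s, path cov x s /\ 0 <= h x + csum (dsc e) x s),
     (forall x, exists m s, path cov m s /\ last m s = x /\ h x <= r + csum (dsc e) m s) &
     (forall M, [forall z, ~~ (M < z)%O] -> h M = 0)].
Proof.
move=> hr.
have [DU [DUm DUa]] := build (dsc e) (fun _ => 0).
have [h [hm ha]] := build e (fun z => - DU z).
exists h; split.
- exact: (@build_cover _ _ e (fun z => - DU z) h ha hm).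
- move=> x; have [s [ps E]] := DUa x; exists s; split => //.
  have := hm x [::] isT; rewrite /=; lia.
- move=> x; have [s2 [ps2 E2]] := ha x.
  set y := last x s2 in E2.
  have [s3 [ps3 E3]] := DUa y.
  set z := last y s3 in E3.
  have [s4 [ps4 mx4]] := ex_max_above z.
  have [m [s1 [mn1 [ps1 l1]]]] := ex_min_below x.
  exists m, s1; split => //; split => //.
  have H34 := DUm y (s3 ++ s4); rewrite cat_path ps3 ps4 csum_cat /= in H34.
  have := H34 isT => {H34} H34.
  have Hmc : max_chain m (s1 ++ s2 ++ s3 ++ s4).
    apply/and3P; split => //.
      rewrite !cat_path ps1 l1 ps2 -/y ps3 -/z ps4.
      by [].
    by rewrite !last_cat l1 -/y -/z.
  have := hr _ _ Hmc; rewrite chain_sumE !csum_cat l1 -/y -/z => Hr.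
  have := csum_e_ge m s1; have := csum_e_ge y s3; have := csum_e_ge z s4.
  have := csum_dsc_ge0 e z s4.
  move=> *; rewrite -/z in H34; clearbody y z; lia.
- move=> M mx; have [s [ps E]] := ha M.
  have s0 := max_no_path mx ps; subst s.
  have [s' [ps' E']] := DUa M.
  have s0 := max_no_path mx ps'; subst s'.
  move: E E' => /= ->; lia.
Qed.

End Inj.


Section Inj2.
Variables (d : Order.disp_t) (T : finPOrderType d).
Local Notation cov := (@covers d T).
Variable e : T -> T -> int.
Hypothesis he : forall x y, e x y = 1 \/ e x y = -1.

Lemma inj_main (r : int) : is_r e r ->
  exists h : T -> int,
  [/\ (forall x y, cov x y -> h y + e x y <= h x),
      (forall M, [forall z, ~~ (M < z)%O] -> h M = 0) &
  forall n N, N%:Z = n%:Z + r ->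
   (Omega e n <= Omega (neg_eps e) N)%N /\
   (Omega e n = Omega (neg_eps e) N -> forall tau : {ffun T -> 'I_N},
      is_partition (neg_eps e) tau ->
      exists sg : {ffun T -> 'I_n}, is_partition e sg /\
        forall x, (tau x)%:Z = (sg x)%:Z + h x)].
Proof.
move=> [[x0 [s0 _]] hr].
have [h [H1 H2 H3 H4]] := h_exists he hr.
exists h; split => // n N HN.
have Hb : forall sg : {ffun T -> 'I_n}, is_partition e sg ->
    forall x, 0 <= (sg x)%:Z + h x < N%:Z.
  move=> sg Hs x; apply/andP; split.
    have [s [ps Hx]] := H2 x.
    have := part_chain Hs ps; lia.
  have [m [s [ps [ls Hx]]]] := H3 x.
  have := part_chain Hs ps; rewrite ls.
  have := ltn_ord (sg m); lia.
have Hc : forall sg : {ffun T -> 'I_n}, is_partition e sg ->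
    forall x y, cov x y -> ((sg y)%:Z + h y) + dsc (neg_eps e) x y <= (sg x)%:Z + h x.
  move=> sg Hs x y cxy.
  have := part_cover Hs cxy; have := H1 _ _ cxy; have := e_split he x y; lia.
rewrite /Omega.
case: N HN Hb Hc => [|N'] HN Hb Hc.
  have E : [set sg : {ffun T -> 'I_n} | is_partition e sg] = set0.
    apply/setP => sg; rewrite inE in_set0; apply/negP => Hs.
    have := Hb sg Hs x0; lia.
  rewrite E cards0; split => // _ tau.
  by case: (tau x0).
pose Phi (sg : {ffun T -> 'I_n}) := [ffun x => (inord (absz ((sg x)%:Z + h x)) : 'I_N'.+1)].
set A := [set sg : {ffun T -> 'I_n} | is_partition e sg].
set B := [set tau : {ffun T -> 'I_N'.+1} | is_partition (neg_eps e) tau].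
have sub : Phi @: A \subset B.
  apply/subsetP => t /imsetP [sg]; rewrite inE => Hs ->.
  rewrite inE; apply: mk_part; [exact: Hb | exact: Hc].
have inj : {in A &, injective Phi}.
  move=> s1 s2; rewrite !inE => H1s H2s E.
  apply/ffunP => x; apply/val_inj.
  have := congr1 (fun f : {ffun T -> 'I_N'.+1} => ((f x : nat) : int)) E.
  rewrite /= /Phi !mk_part_val; [lia | exact: Hb | exact: Hb].
have cA := card_in_imset inj.
split; first by rewrite -cA; apply: subset_leq_card.
move=> Eq tau Ht.
have : tau \in Phi @: A.
  have HC : #|Phi @: A| = #|B| by rewrite cA.
  move/(subset_cardP HC): sub => EAB.
  by rewrite EAB inE.
case/imsetP => sg; rewrite inE => Hs ->.
exists sg; split => // x.
rewrite /Phi mk_part_val //; exact: Hb.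
Qed.

End Inj2.


Section Grow.
Variables (d : Order.disp_t) (T : finPOrderType d).
Local Notation cov := (@covers d T).
Variable e : T -> T -> int.

Lemma csum_dsc_lt w x s : path cov x s -> csum (dsc w) x s < (#|T|)%:Z.
Proof.
move=> ps; have := csum_dsc_size w x s; have := path_size ps; lia.
Qed.

Lemma omega_grow (x0 : T) m : (#|T| <= m)%N -> (Omega e m < Omega e m.+1)%N.
Proof.
move=> Hm; rewrite /Omega.
set A := [set sg : {ffun T -> 'I_m} | is_partition e sg].
set A' := [set sg : {ffun T -> 'I_m.+1} | is_partition e sg].
pose Psi (sg : {ffun T -> 'I_m}) := [ffun x => (inord (absz ((sg x)%:Z + 1)) : 'I_m.+1)].
have Hb : forall sg : {ffun T -> 'I_m}, forall x, 0 <= (sg x)%:Z + 1 < m.+1%:Z.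
  move=> sg x; have := ltn_ord (sg x); lia.
have inj : {in A &, injective Psi}.
  move=> s1 s2; rewrite !inE => H1s H2s E.
  apply/ffunP => x; apply/val_inj.
  have := congr1 (fun f : {ffun T -> 'I_m.+1} => ((f x : nat) : int)) E.
  rewrite /= /Psi !mk_part_val; [lia | exact: Hb | exact: Hb].
have [tau [tm ta]] := build (dsc e) (fun _ => 0).
have Htb : forall z, 0 <= tau z < m.+1%:Z.
  move=> z; apply/andP; split; first by have := tm z [::] isT.
  have [s [ps ->]] := ta z; have := csum_dsc_lt e ps; lia.
pose T0 := [ffun x => (inord (absz (tau x)) : 'I_m.+1)].
have T0in : T0 \in A'.
  rewrite inE; apply: mk_part => //.
  exact: (@build_cover _ _ (dsc e) (fun _ => 0) tau ta tm).
have [s [ps mx]] := ex_max_above x0.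
set M := last x0 s in mx.
have tauM : tau M = 0.
  have [s' [ps' ->]] := ta M.
  by rewrite (max_no_path mx ps').
rewrite -(card_in_imset inj); apply: proper_card; apply/properP; split.
  apply/subsetP => t /imsetP [sg]; rewrite inE => Hs ->.
  rewrite inE; apply: mk_part; first exact: Hb.
  move=> x y cxy; have := part_cover Hs cxy; lia.
exists T0 => //; apply/negP => /imsetP [sg _] E.
have := congr1 (fun f : {ffun T -> 'I_m.+1} => ((f M : nat) : int)) E.
rewrite /= /T0 /Psi !mk_part_val ?tauM //; first lia.
Qed.

Hypothesis he : forall x y, e x y = 1 \/ e x y = -1.

Lemma path_h (h : T -> int) : (forall x y, cov x y -> h x <= h y + e x y) ->
  forall x s, path cov x s -> h x <= h (last x s) + csum e x s.
Proof.
move=> Hh x s; elim: s x => [|y s IH] x /=; first by rewrite addr0.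
case/andP=> cxy ps; have := IH y ps; have := Hh _ _ cxy; lia.
Qed.

Lemma graded_of_eq (r : int) (n0 : nat) : is_r e r ->
  (forall n N, (n0 <= n)%N -> N%:Z = n%:Z + r -> Omega e n = Omega (neg_eps e) N) ->
  graded e.
Proof.
move=> hr Heqs.
have [[x0 [s0 _]] hrl] := hr.
have [h [H1 H4 Hmain]] := inj_main he hr.
have p0 : (0 < #|T|)%N by apply/card_gt0P; exists x0.
set p := #|T| in p0.
pose n := (n0 + 3 * p + absz r)%N.
have [N HN] : exists N : nat, N%:Z = n%:Z + r by exists (absz (n%:Z + r)); rewrite /n; lia.
have [_ Hsurj] := Hmain n N HN.
have Hn0 : (n0 <= n)%N by rewrite /n; lia.
have Hs := Hsurj (Heqs n N Hn0 HN).
clear Hsurj Hmain.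
case: N HN Hs => [|N'] HN Hs; first by lia.
have Ha : forall x y, cov x y -> h x <= h y + e x y.
  move=> x y cxy.
  have [tau [tm ta]] := build (dsc (neg_eps e)) (fun w => if w == y then p%:Z else 0).
  have Htb : forall z, 0 <= tau z < N'.+1%:Z.
    move=> z; apply/andP; split.
      have := tm z [::] isT; rewrite /=; case: (z == y); lia.
    have [s [ps ->]] := ta z; have := csum_dsc_lt (neg_eps e) ps.
    case: (last z s == y); lia.
  have ty : p%:Z <= tau y by have := tm y [::] isT; rewrite /= eqxx; lia.
  have tx : tau x <= p%:Z + dsc (neg_eps e) x y.
    have [s [ps ->]] := ta x.
    case: (eqVneq (last x s) y) => [E|E].
      by rewrite (path_cover_last cxy ps E) /= addr0.
    have := csum_dsc_lt (neg_eps e) ps; have := dsc_ge0 (neg_eps e) x y; lia.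
  pose t0 := [ffun z => (inord (absz (tau z)) : 'I_N'.+1)].
  have t0p : is_partition (neg_eps e) t0.
    apply: mk_part => //.
    exact: (@build_cover _ _ _ (fun w => if w == y then p%:Z else 0) tau ta tm).
  have [sg [Hsg Hv]] := Hs t0 t0p.
  have := Hv x; have := Hv y; rewrite /t0 !mk_part_val // => vy vx.
  have := part_cover Hsg cxy; have := e_split he x y; lia.
have Hb : forall m0, [forall z, ~~ (z < m0)%O] -> r <= h m0.
  move=> m0 mn.
  have [tau [tm ta]] := build (dsc (neg_eps e)) (fun w => if w == m0 then N'%:Z else 0).
  have Htb : forall z, 0 <= tau z < N'.+1%:Z.
    move=> z; apply/andP; split.
      have := tm z [::] isT; rewrite /=; case: (z == m0); lia.
    have [s [ps ->]] := ta z; have := csum_dsc_lt (neg_eps e) ps.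
    case: (eqVneq (last z s) m0) => [E|E]; last lia.
    have zm : z = m0.
      have := path_le_last ps; rewrite E le_eqVlt => /orP [/eqP //|zm].
      by move: mn => /forallP /(_ z); rewrite zm.
    subst z; rewrite (path_last_eq ps E) /=; lia.
  have tm0 : N'%:Z <= tau m0 by have := tm m0 [::] isT; rewrite /= eqxx; lia.
  pose t0 := [ffun z => (inord (absz (tau z)) : 'I_N'.+1)].
  have t0p : is_partition (neg_eps e) t0.
    apply: mk_part => //.
    exact: (@build_cover _ _ _ (fun w => if w == m0 then N'%:Z else 0) tau ta tm).
  have [sg [Hsg Hv]] := Hs t0 t0p.
  have := Hv m0; rewrite /t0 !mk_part_val // => vm.
  have := ltn_ord (sg m0); lia.
have Hall : forall x s, max_chain x s -> chain_sum e x s = r.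
  move=> x s Hmc; have := hrl x s Hmc; move: Hmc => /and3P [ps mn mx] Hle.
  have := path_h Ha ps; rewrite (H4 _ mx) chain_sumE in Hle *.
  have := Hb _ mn; lia.
by move=> x s y t Hx Hy; rewrite (Hall _ _ Hx) (Hall _ _ Hy).
Qed.

End Grow.


Lemma strict_mono (F : nat -> nat) p : (forall m, (p <= m)%N -> (F m < F m.+1)%N) ->
  forall m m', (p <= m)%N -> (m < m')%N -> (F m < F m')%N.
Proof.
move=> H m m' pm; elim: m' => [|m' IH] //.
rewrite ltnS leq_eqVlt => /orP [/eqP <-|lt]; first exact: H.
apply: ltn_trans (IH lt) (H _ _); exact: leq_trans pm (ltnW lt).
Qed.

Unset Implicit Arguments.

Theorem corollary7p4 (d : Order.disp_t) (T : finPOrderType d)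
  (omega : T -> 'I_#|T|) (homega : bijective omega)
  (pe pne : {poly rat})
  (hpe : forall n : nat, pe.[n%:R] = (Omega (eps omega) n)%:R)
  (hpne : forall n : nat, pne.[n%:R] = (Omega (neg_eps (eps omega)) n)%:R)
  (s : int)
  (hs : forall t : rat, pe.[t] = pne.[t + s%:~R])
  (r1 r2 : int)
  (hr1 : is_r (eps omega) r1)
  (hr2 : is_r (neg_eps (eps omega)) r2) :
  (- r2 <= s <= r1)%R /\
  (s = r1 <-> graded (eps omega)) /\
  (s = - r2 <-> graded (eps omega))%R.
Proof.
set e := eps omega in hpe hpne hr1 hr2 *.
have he : forall x y, e x y = 1 \/ e x y = -1.
  by move=> x y; rewrite /e /eps; case: ifP; [left | right].
have he' : forall x y, neg_eps e x y = 1 \/ neg_eps e x y = -1.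
  by move=> x y; rewrite /neg_eps; case: (he x y) => ->; [right | left]; rewrite ?opprK.
have nn : neg_eps (neg_eps e) = e.
  by apply: functional_extensionality => x; apply: functional_extensionality => y;
     rewrite /neg_eps opprK.
have csN : forall x t, chain_sum (neg_eps e) x t = - chain_sum e x t.
  by move=> x t; rewrite /chain_sum /neg_eps sumrN.
have grN : graded (neg_eps e) -> graded e.
  move=> G x t y u Hx Hy; have := G x t y u Hx Hy; rewrite !csN => /eqP.
  by rewrite eqr_opp => /eqP.
have [[x0 _] _] := hr1.
set p := #|T|.
pose f := Omega e. pose g := Omega (neg_eps e).
have Hnat : forall n : nat, (absz s <= n)%N -> f n = g (absz (n%:Z + s)).
  move=> n Hn; have := hs n%:R.
  have -> : (n%:R : rat) + s%:~R = (absz (n%:Z + s))%:R.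
    have E : n%:Z + s = (absz (n%:Z + s))%:Z by lia.
    by rewrite !pmulrn -E intrD.
  rewrite hpe hpne => /eqP; rewrite eqr_nat => /eqP //.
have [h1 [_ _ M1]] := inj_main he hr1.
have [h2 [_ _ M2]] := inj_main he' hr2.
have I1 : forall n N, N%:Z = n%:Z + r1 -> (f n <= g N)%N.
  by move=> n N HN; have [] := M1 n N HN.
have I2 : forall n N, N%:Z = n%:Z + r2 -> (g n <= f N)%N.
  by move=> n N HN; have [] := M2 n N HN; rewrite nn.
have Gf : forall m m', (p <= m)%N -> (m < m')%N -> (f m < f m')%N.
  by apply: strict_mono => m pm; exact: omega_grow _ x0 _ pm.
have Gg : forall m m', (p <= m)%N -> (m < m')%N -> (g m < g m')%N.
  by apply: strict_mono => m pm; exact: omega_grow _ x0 _ pm.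
have Hup : s <= r1.
  rewrite leNgt; apply/negP => lt.
  pose n := (p + absz s + absz r1)%N.
  have Hnn : (absz s <= n)%N by rewrite /n; lia.
  have E1 := Hnat n Hnn.
  have [N1 HN1] : exists N1 : nat, N1%:Z = n%:Z + r1 by exists (absz (n%:Z + r1)); rewrite /n; lia.
  have L := I1 n N1 HN1.
  have L2 : (g N1 < g (absz (n%:Z + s)%R))%N by apply: Gg; rewrite /n; lia.
  by rewrite -E1 in L2; have := leq_trans L2 L; rewrite ltnn.
have Hlo : - r2 <= s.
  rewrite leNgt; apply/negP => lt.
  pose m := (p + 2 * absz s + absz r2)%N.
  have [n Hn] : exists n : nat, n%:Z = m%:Z - s by exists (absz (m%:Z - s)); rewrite /m; lia.
  have Hnn : (absz s <= n)%N by rewrite /m in Hn; lia.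
  have E1 := Hnat n Hnn.
  have Em : absz (n%:Z + s) = m by lia.
  rewrite Em in E1.
  have [N2 HN2] : exists N2 : nat, N2%:Z = m%:Z + r2 by exists (absz (m%:Z + r2)); rewrite /m; lia.
  have L := I2 m N2 HN2.
  have L2 : (f N2 < f n)%N by apply: Gf; rewrite /m in HN2 Hn; lia.
  by rewrite E1 in L2; have := leq_trans L2 L; rewrite ltnn.
have Hgr : graded e -> s = r1 /\ s = - r2.
  move=> G.
  have [[x1 [t1 [c1 E1]]] _] := hr1.
  have [[x2 [t2 [c2 E2]]] _] := hr2.
  rewrite csN in E2; have := G _ _ _ _ c1 c2; rewrite E1.
  move: Hup Hlo; lia.
split; first by rewrite Hlo Hup.
split; split; try by move/Hgr => [].
- move=> Es; apply: (graded_of_eq he (n0 := absz s) hr1) => n N Hn HN.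
  have := Hnat n Hn; rewrite /f /g => ->; congr Omega; lia.
- move=> Es; apply: grN; apply: (graded_of_eq he' (n0 := (2 * absz s)%N) hr2) => n N Hn HN.
  rewrite nn.
  have Hk : (absz s <= N)%N by lia.
  have := Hnat N Hk; rewrite /f /g => ->; congr Omega; lia.
Qed.
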